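(* Let $\theta,\theta'$ be real antisymmetric $n\times n$ matrices and $l\ge 1$. Let $\bar C^l\subset C^l=\mathrm{Hom}(B^l(A_\theta),A_{\theta'}[1])$ be the subcomplex of normal cochains. Then $H^k(\bar C^l)=0$ for all $k>0$; in particular $H^1(\bar C^l)=0$.
   Context: For a real antisymmetric $n\times n$ matrix $\theta$, $A_\theta$ is the unital dg-algebra over $\mathbb{R}$ generated by $x^1,\dots,x^n$ (degree $0$) and $\xi^1,\dots,\xi^n$ (degree $1$) with relations $x^ix^j-x^jx^i=\theta^{ij}$, $x^i\xi^j=\xi^jx^i$, $\xi^i\xi^j=0$, and differential $dx^i=\xi^i$, $d\xi^i=0$ (graded Leibniz rule). As a vector space $A_\theta$ is the space of polynomials $a_0(x)+a_i(x)\xi^i$ in commuting $x$'s at most linear in the $\xi$'s. $A_\theta[1]$ is the degree shift ($A_\theta[1]_k=(A_\theta)_{k+1}$), $B^l(A_\theta)=A_\theta[1]^{\otimes l}$ carries the differential induced by $d$ (with Koszul signs), and $C^l=\bigoplus_k\mathrm{Hom}^k(B^l(A_\theta),A_{\theta'}[1])$, where $\mathrm{Hom}^k$ consists of linear maps raising degree by $k$, with differential $d_l(f)=f\circ d$. A cochain $f\in C^l$ is normal if $f(a_1,\dots,a_l)=0$ whenever some $a_i$ equals $1\in A_\theta$; normal cochains form a subcomplex $\bar C^l$. *)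

(* Defs.v *)
From HB Require Import structures.
From mathcomp Require Import all_boot all_order all_algebra.
From mathcomp Require Import mpoly.
From mathcomp Require Import reals.

Set Implicit Arguments.
Unset Strict Implicit.
Unset Printing Implicit Defensive.

Import Order.TTheory GRing.Theory Num.Theory.
Local Open Scope ring_scope.

Section NCSpace.
Variables (R : realType) (n : nat).

Definition antisym (theta : 'M[R]_n) : Prop := theta^T = - theta.

(* Underlying graded vector space of A_theta: an element a_0(x) + a_i(x) xi^i is
   the pair (a_0, (a_i)_i); degree-0 part = first component, degree-1 part =
   second component.  The (graded) vector space, unit and differential do not
   depend on theta; theta only enters the product, which plays no role in the
   complex C^l. *)
Definition Aspace : Type := ({mpoly R[n]} * {ffun 'I_n -> {mpoly R[n]}})%type.
Definition A (theta : 'M[R]_n) : lmodType R := Aspace.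

Definition Aone (theta : 'M[R]_n) : A theta := (1, 0).

(* differential d(a_0 + a_i xi^i) = (d_j a_0) xi^j, since dx^j = xi^j, xi^i xi^j = 0
   and the xi's are central. *)
Definition Ad (theta : 'M[R]_n) (a : A theta) : A theta :=
  (0, [ffun j => mderiv j a.1]).

Definition Ahomog (theta : 'M[R]_n) (t : int) (a : A theta) : bool :=
  if t == 0 then a.2 == 0 else if t == 1 then a.1 == 0 else a == 0.

(* Koszul sign operator on A[1]: a |-> (-1)^{|a|_{A[1]}} a, where the degree in
   A[1] is the degree in A minus one. *)
Definition Asign (theta : 'M[R]_n) (a : A theta) : A theta := (- a.1, a.2).

End NCSpace.

Section Cochains.
Variables (R : realType) (n l : nat) (theta theta' : 'M[R]_n).

(* Linear maps B^l(A_theta) = A_theta[1]^{(x) l} -> A_theta'[1] are identified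
   (universal property of the tensor product) with l-multilinear maps. *)
Definition upd (a : 'I_l -> A theta) (i : 'I_l) (x : A theta) : 'I_l -> A theta :=
  fun j => if j == i then x else a j.

Definition multilinear (f : ('I_l -> A theta) -> A theta') : Prop :=
  forall (a : 'I_l -> A theta) (i : 'I_l) (c : R) (x y : A theta),
    f (upd a i (c *: x + y)) = c *: f (upd a i x) + f (upd a i y).

(* f is in Hom^k: on homogeneous inputs a_i of A-degree e_i (i.e. A[1]-degree
   e_i - 1), the output has A[1]-degree sum_i (e_i - 1) + k, i.e. A-degree
   sum_i e_i - l + k + 1. *)
Definition homCochain (k : int) (f : ('I_l -> A theta) -> A theta') : Prop :=
  multilinear f /\
  forall (e : 'I_l -> bool) (a : 'I_l -> A theta),
    (forall i, Ahomog (e i)%:Z (a i)) ->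
    Ahomog ((\sum_(i < l) (e i : nat))%:Z - l%:Z + k + 1) (f a).

Definition normal (f : ('I_l -> A theta) -> A theta') : Prop :=
  forall (a : 'I_l -> A theta) (i : 'I_l), a i = Aone theta -> f a = 0.

(* The differential of B^l(A_theta) with Koszul signs:
   d(a_1 (x) ... (x) a_l) = sum_i (-1)^{|a_1|+...+|a_(i-1)|} a_1 (x) .. (x) d a_i (x) .. (x) a_l,
   so that (f o d)(a) = sum_i f(eps a_1, .., eps a_(i-1), d a_i, a_(i+1), .., a_l). *)
Definition Bd_arg (a : 'I_l -> A theta) (i : 'I_l) : 'I_l -> A theta :=
  fun j => if (j < i)%N then Asign (a j)
           else if j == i then Ad (a j) else a j.

Definition dcoch (f : ('I_l -> A theta) -> A theta') : ('I_l -> A theta) -> A theta' :=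
  fun a => \sum_(i < l) f (Bd_arg a i).

End Cochains.

(* Main.v *)
Require Import Defs.
From HB Require Import structures.
From mathcomp Require Import all_boot all_order all_algebra.
From mathcomp Require Import mpoly.
From mathcomp Require Import reals.
From Stdlib Require Import FunctionalExtensionality.
From mathcomp Require Import zify.
Import GRing.Theory Num.Theory.
Local Open Scope ring_scope.

Module Helpers.
Set Implicit Arguments. Unset Strict Implicit. Unset Printing Implicit Defensive.
Import Order.TTheory GRing.Theory Num.Theory.
Local Open Scope ring_scope.

Section P.
Variables (R : realType) (n : nat).
Local Notation P := {mpoly R[n]}.
Local Notation W := {ffun 'I_n -> P}.

Lemma coef_sumX (s : seq 'X_{1..n}) (F : 'X_{1..n} -> R) k : uniq s ->
  (\sum_(m <- s) F m *: 'X_[m] : P)@_k = if k \in s then F k else 0.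
Proof.
move=> us; rewrite raddf_sum /=.
under eq_bigr do rewrite mcoeffZ mcoeffX.
case: ifP => ks.
  rewrite (bigD1_seq k) //= eqxx mulr1 big1 ?addr0 // => m /negbTE ->.
  by rewrite mulr0.
by rewrite big_seq big1 // => m ms; case: eqP ms => [->|]; rewrite ?ks // mulr0.
Qed.

Definition Sop (q : P) : P :=
  \sum_(m <- msupp q) ((mdeg m)%:R^-1 * q@_m) *: 'X_[m].

Lemma SopE q k : (Sop q)@_k = (mdeg k)%:R^-1 * q@_k.
Proof.
rewrite /Sop coef_sumX ?msupp_uniq //; case: ifP => // /negbT.
by rewrite -mcoeff_eq0 => /eqP ->; rewrite mulr0.
Qed.

Definition hop (w : W) : P := Sop (\sum_i 'X_i * w i).

Lemma hop_lin c w v : hop (c *: w + v) = c *: hop w + hop v.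
Proof.
apply/mpolyP => k; rewrite mcoeffD mcoeffZ /hop !SopE.
rewrite mulrCA -mulrDr; congr (_ * _).
rewrite !raddf_sum mulr_sumr -big_split; apply: eq_bigr => i _.
by rewrite !ffunE mulrDr -scalerAr raddfD /= mcoeffZ.
Qed.

Lemma hop0 : hop 0 = 0.
Proof.
apply/mpolyP => k; rewrite /hop SopE.
under eq_bigr do rewrite ffunE mulr0.
by rewrite big1_eq mcoeff0 mulr0.
Qed.

Lemma euler_X m : \sum_i 'X_i * mderiv i ('X_[m] : P) = (mdeg m)%:R *: 'X_[m].
Proof.
rewrite mdegE natr_sum scaler_suml; apply: eq_bigr => i _.
rewrite mderivX -scalerAr -mpolyXD.
case: (ltnP 0 (m i)) => [mi|]; last by rewrite leqn0 => /eqP ->; rewrite !scale0r.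
congr (_ *: 'X_[_]); apply/mnmP => j; rewrite mnmDE mnmBE mnm1E.
by case: (eqVneq i j) => [<-|]; rewrite ?subn0 // add1n subn1 prednK.
Qed.

Lemma euler p k : (\sum_i ('X_i : P) * mderiv i p)@_k = (mdeg k)%:R * p@_k.
Proof.
rewrite {1}(mpolyE p).
have -> : \sum_i 'X_i * mderiv i (\sum_(m <- msupp p) p@_m *: 'X_[m])
   = \sum_(m <- msupp p) (p@_m * (mdeg m)%:R) *: ('X_[m] : P).
  under eq_bigr do rewrite raddf_sum mulr_sumr.
  rewrite exchange_big /=; apply: eq_bigr => m _.
  rewrite -scalerA -euler_X scaler_sumr; apply: eq_bigr => i _.
  by rewrite linearZ /= scalerAr.
rewrite coef_sumX ?msupp_uniq //; case: ifP => [_|/negbT]; first by rewrite mulrC.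
by rewrite -mcoeff_eq0 => /eqP ->; rewrite mulr0.
Qed.

Definition grad (p : P) : W := [ffun j => mderiv j p].

Lemma hop_grad p : hop (grad p) = p - (p@_0%MM)%:MP.
Proof.
apply/mpolyP => k; rewrite /hop SopE.
under eq_bigr do rewrite ffunE.
rewrite euler mcoeffB mcoeffC.
case: (eqVneq k 0%MM) => [->|nk]; first by rewrite mdeg0 invr0 mul0r mulr1 subrr.
rewrite mulr0 subr0 mulrA mulVf ?mul1r // pnatr_eq0 mdeg_eq0 //.
Qed.

End P.

Section Ops.
Variables (R : realType) (n : nat).
Local Notation P := {mpoly R[n]}.
Local Notation S := (Aspace R n).

Definition sA (a : S) : S := (hop a.2, 0).
Definition piA (a : S) : S := ((a.1@_0%MM)%:MP, a.2 - grad (hop a.2)).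

Variable theta : 'M[R]_n.


Local Notation AT := (A theta).
Lemma pairE (x y : AT) : x.1 = y.1 -> x.2 = y.2 -> x = y.
Proof. by case: x; case: y => /= ? ? ? ? -> ->. Qed.
Lemma fstD (x y : AT) : (x + y).1 = x.1 + y.1. Proof. by []. Qed.
Lemma sndD (x y : AT) : (x + y).2 = x.2 + y.2. Proof. by []. Qed.
Lemma fstZ c (x : AT) : (c *: x).1 = c *: x.1. Proof. by []. Qed.
Lemma sndZ c (x : AT) : (c *: x).2 = c *: x.2. Proof. by []. Qed.
Lemma fstN (x : AT) : (- x).1 = - x.1. Proof. by []. Qed.
Lemma sndN (x : AT) : (- x).2 = - x.2. Proof. by []. Qed.
Lemma fst0 : (0 : AT).1 = 0. Proof. by []. Qed.
Lemma snd0 : (0 : AT).2 = 0. Proof. by []. Qed.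
Definition prE := (fstD, sndD, fstZ, sndZ, fstN, sndN, fst0, snd0).

Local Notation Adt := (Ad (theta:=theta)).
Local Notation Asg := (Asign (theta:=theta)).

Lemma grad_lin (c : R) (p q : P) : grad (c *: p + q) = c *: grad p + grad q.
Proof. by apply/ffunP => j; rewrite !ffunE linearD linearZ. Qed.
Lemma gradC (c : R) : grad (c%:MP : P) = 0 :> {ffun 'I_n -> P}.
Proof. by apply/ffunP => j; rewrite !ffunE mderivC. Qed.
Lemma grad0 : grad (0 : P) = 0 :> {ffun 'I_n -> P}.
Proof. by rewrite -mpolyC0 gradC. Qed.
Lemma gradB (p q : P) : grad (p - q) = grad p - grad q.
Proof. by apply/ffunP => j; rewrite !ffunE linearB. Qed.

Lemma F1 (a : AT) : sA (Adt a) + Adt (sA a) = a - piA a.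
Proof.
apply: pairE; rewrite !prE /sA /Ad /piA /=.
  by rewrite -/(grad a.1) hop_grad addr0.
by rewrite add0r opprB addrC subrK.
Qed.

Lemma F2 (a : AT) : piA (Asg (Adt a)) = 0.
Proof.
apply: pairE; rewrite !prE /sA /Ad /piA /Asign /=.
  by rewrite oppr0 mcoeff0.
by rewrite -/(grad a.1) hop_grad gradB gradC subr0 subrr.
Qed.

Lemma F3 (a : AT) : Adt (piA (Asg a)) = 0.
Proof. by apply: pairE; rewrite !prE /Ad /piA /Asign //= -/(grad _) gradC. Qed.

Lemma F4 (a : AT) : piA (Asg (Asg a)) = piA a.
Proof. by rewrite /Asign /= opprK; case: a. Qed.

Lemma F5 (a : AT) : Asg (piA (Asg a)) = piA a.
Proof. by apply: pairE; rewrite /Asign /piA //= mcoeffN mpolyCN opprK. Qed.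

Lemma F6 (a : AT) : sA (Asg a) = sA a.
Proof. by []. Qed.

Lemma F7 (a : AT) : Asg (sA a) = - sA a.
Proof. by apply: pairE; rewrite !prE /Asign /sA //= oppr0. Qed.

Lemma piA_lin c (x y : AT) : piA (c *: x + y) = c *: piA x + piA y.
Proof.
apply: pairE; rewrite !prE /piA /=.
  by rewrite mcoeffD mcoeffZ mpolyCD -mul_mpolyC mpolyCM mul_mpolyC.
rewrite hop_lin grad_lin scalerBr opprD addrACA.
by rewrite -!addrA; congr (_ + _); rewrite !addrA [_ + y.2]addrC.
Qed.

Lemma Asign_lin c (x y : AT) : Asg (c *: x + y) = c *: Asg x + Asg y.
Proof. by apply: pairE; rewrite !prE /Asign //= scalerN opprD. Qed.

Lemma sA_lin c (x y : AT) : sA (c *: x + y) = c *: sA x + sA y.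
Proof. by apply: pairE; rewrite !prE /sA //= ?hop_lin // scaler0 addr0. Qed.

Lemma pisA_lin c (x y : AT) : piA (Asg (c *: x + y)) = c *: piA (Asg x) + piA (Asg y).
Proof. by rewrite Asign_lin piA_lin. Qed.

Lemma piA_one : piA (Asg (Aone theta)) = - Aone theta.
Proof.
apply: pairE; rewrite !prE /piA /Asign /Aone /=.
  by rewrite mcoeffN mcoeff1 eqxx mpolyCN.
by rewrite hop0 grad0 subr0 oppr0.
Qed.

Lemma sA_one : sA (Aone theta) = 0.
Proof. by apply: pairE; rewrite /sA /Aone //= hop0. Qed.

Lemma sA_deg0 (x : AT) : x.2 = 0 -> sA x = 0.
Proof. by move=> h; apply: pairE; rewrite /sA //= h hop0. Qed.

Lemma piA_const (x : AT) : exists c, (piA x).1 = c%:MP.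
Proof. by eexists. Qed.

End Ops.


Section Main.
Variables (R : realType) (n l : nat) (theta theta' : 'M[R]_n).
Local Notation AT := (A theta).
Local Notation AT' := (A theta').
Variable f : ('I_l -> AT) -> AT'.
Hypothesis fml : multilinear f.

Local Notation Adt := (Ad (theta:=theta)).
Local Notation Asg := (Asign (theta:=theta)).

Lemma upd_id (a : 'I_l -> AT) i : upd a i (a i) = a.
Proof. by apply: functional_extensionality => k; rewrite /upd; case: eqP => [->|]. Qed.

Lemma upd_upd (a : 'I_l -> AT) i x y : upd (upd a i x) i y = upd a i y.
Proof. by apply: functional_extensionality => k; rewrite /upd; case: eqP. Qed.

Lemma fD (b : 'I_l -> AT) i x y : f (upd b i (x + y)) = f (upd b i x) + f (upd b i y).
Proof. by have := fml b i 1 x y; rewrite !scale1r. Qed.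

Lemma f0 (b : 'I_l -> AT) i : b i = 0 -> f b = 0.
Proof.
move=> h; rewrite -(upd_id b i) h.
have := fD b i 0 0; rewrite addr0 => /eqP.
by rewrite -subr_eq0 opprD addrA subrr add0r oppr_eq0 => /eqP.
Qed.

Lemma fN (b : 'I_l -> AT) i x : f (upd b i (- x)) = - f (upd b i x).
Proof.
apply/eqP; rewrite -subr_eq0 opprK addrC -fD subrr; apply/eqP.
by apply: (@f0 _ i); rewrite /upd eqxx.
Qed.

Definition T (j : 'I_l) (a : 'I_l -> AT) : 'I_l -> AT :=
  fun k => if (k < j)%N then piA (Asg (a k)) else if k == j then sA (a k) else a k.
Definition Pp (j : nat) (a : 'I_l -> AT) : 'I_l -> AT :=
  fun k => if (k < j)%N then piA (a k) else a k.
Definition g (a : 'I_l -> AT) : AT' := \sum_(j < l) f (T j a).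

Lemma pair_term (i j : 'I_l) (a : 'I_l -> AT) :
  f (T j (Bd_arg a i)) + f (Bd_arg (T j a) i) =
  if i == j then f (Pp j a) - f (Pp j.+1 a) else 0.
Proof.
case: (ltngtP i j) => hij.
- have ne : (i == j) = false by apply/negbTE; rewrite -val_eqE /= neq_ltn hij.
  rewrite ne (@f0 _ i) ?(@f0 (Bd_arg (T j a) i) i) ?addr0 //.
    by rewrite /Bd_arg /T ltnn eqxx hij F3.
  by rewrite /T /Bd_arg hij ltnn eqxx F2.
- have ne : (i == j) = false by apply/negbTE; rewrite -val_eqE /= neq_ltn hij orbT.
  set b := Bd_arg (T j a) i.
  have E1 : T j (Bd_arg a i) = upd b j (sA (a j)).
    apply: functional_extensionality => k; rewrite /b /T /upd /Bd_arg -!val_eqE /=.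
    case: (ltngtP k j) => hkj; case: (ltngtP k i) => hki //=; try lia.
    all: rewrite ?F4 ?F5 ?F6 //.
    all: try (rewrite ltnNge (ltnW hkj) /= gtn_eqF //).
    by congr (sA (a _)); apply: val_inj.
  have E2 : b = upd b j (- sA (a j)).
    rewrite -F7; apply: functional_extensionality => k; rewrite /upd.
    case: eqP => [->|//]; by rewrite /b /Bd_arg hij /T ltnn eqxx.
  by rewrite ne E1 {2}E2 fN subrr.
- have -> : i = j by apply: val_inj.
  rewrite eqxx.
  set c := Pp j a.
  have E1 : T j (Bd_arg a j) = upd c j (sA (Adt (a j))).
    apply: functional_extensionality => k; rewrite /T /upd /c /Pp /Bd_arg -!val_eqE /=.
    case: (ltngtP k j) => hkj //=; rewrite ?F4 //.
    by have kj : k = j := val_inj hkj; subst k.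
  have E2 : Bd_arg (T j a) j = upd c j (Adt (sA (a j))).
    apply: functional_extensionality => k; rewrite /T /upd /c /Pp /Bd_arg -!val_eqE /=.
    case: (ltngtP k j) => hkj //=; rewrite ?F5 //.
    by have kj : k = j := val_inj hkj; subst k.
  have E3 : upd c j (a j) = Pp j a.
    apply: functional_extensionality => k; rewrite /upd /c /Pp -!val_eqE /=.
    case: (ltngtP k j) => hkj //=.
    by have kj : k = j := val_inj hkj; subst k.
  have E4 : upd c j (piA (a j)) = Pp j.+1 a.
    apply: functional_extensionality => k; rewrite /upd /c /Pp -!val_eqE /= ltnS.
    case: (ltngtP k j) => hkj //=.
    by have kj : k = j := val_inj hkj; subst k.
  by rewrite E1 E2 -fD F1 fD fN E3 E4.
Qed.


Lemma dcoch_g (hfc : forall a, dcoch f a = 0) a : dcoch g a = f a - f (Pp l a).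
Proof.
rewrite /dcoch /g exchange_big /=.
have H : \sum_(j < l) \sum_(i < l) f (Bd_arg (T j a) i) = 0.
  by apply: big1 => j _; apply: hfc.
transitivity (\sum_(j < l) \sum_(i < l) f (T j (Bd_arg a i)) + \sum_(j < l) \sum_(i < l) f (Bd_arg (T j a) i)); first by rewrite H addr0.
rewrite -big_split /=.
under eq_bigr do rewrite -big_split /=.
under eq_bigr => j _ do under eq_bigr => i _ do rewrite pair_term.
under eq_bigr => j _ do rewrite -big_mkcond /= big_pred1_eq.
have P0 : Pp 0 a = a by [].
have := @telescope_sumr_eq _ 0 l (fun j => - f (Pp j a)) (fun j => f (Pp j a) - f (Pp j.+1 a)) (leq0n l).
rewrite big_mkord P0 opprK addrC => -> //.
by move=> k _; rewrite opprK addrC.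
Qed.
End Main.

Section M2.
Variables (R : realType) (n l : nat) (theta theta' : 'M[R]_n).
Local Notation AT := (A theta).
Local Notation AT' := (A theta').
Lemma Ahomog0 (t : int) : Ahomog t (0 : AT').
Proof. by rewrite /Ahomog; case: (t == 0); [|case: (t == 1)]; apply: eqxx. Qed.

Lemma Ahomog_add (t : int) (x y : AT') : Ahomog t x -> Ahomog t y -> Ahomog t (x + y).
Proof.
rewrite /Ahomog; case: (t == 0); [|case: (t == 1)].
- by move=> /eqP hx /eqP hy; rewrite sndD hx hy addr0 eqxx.
- by move=> /eqP hx /eqP hy; rewrite fstD hx hy addr0 eqxx.
- by move=> /eqP -> /eqP ->; rewrite addr0 eqxx.
Qed.

Lemma Ahomog_sum (t : int) (F : 'I_l -> AT') :
  (forall j, Ahomog t (F j)) -> Ahomog t (\sum_j F j).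
Proof.
move=> h; apply: (big_ind (fun x => Ahomog t x)); [exact: Ahomog0|exact: Ahomog_add|].
by move=> i _; exact: h.
Qed.

End M2.

Section M3.
Variables (R : realType) (n l : nat) (theta theta' : 'M[R]_n).
Local Notation AT := (A theta).
Local Notation AT' := (A theta').
Local Notation Asg := (Asign (theta:=theta)).
Variable f : ('I_l -> AT) -> AT'.
Hypothesis fml : multilinear f.

Lemma vanish_Q (k : int) (hk : 0 < k)
  (hfh : forall (e : 'I_l -> bool) (a : 'I_l -> AT),
    (forall i, Ahomog (e i)%:Z (a i)) ->
    Ahomog ((\sum_(i < l) (e i : nat))%:Z - l%:Z + k + 1) (f a))
  (hfn : normal f) d :
  forall b : 'I_l -> AT, (forall kk : 'I_l, (d <= kk)%N -> (b kk).1 = 0) ->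
  (forall kk, exists c, (b kk).1 = c%:MP) -> f b = 0.
Proof.
elim: d => [|d IH] b hp hc.
  have := hfh (fun _ => true) b.
  have -> : (\sum_(i < l) ((fun _ => true) i : nat)) = l.
    by rewrite sum_nat_const card_ord muln1.
  rewrite subrr add0r /Ahomog.
  have -> : (k + 1 == 0) = false by apply/negbTE/eqP; lia.
  have -> : (k + 1 == 1) = false by apply/negbTE/eqP; lia.
  move=> H; apply/eqP; apply: H => i.
  rewrite /Ahomog.
  have -> : (((true:nat)%:Z) == 0) = false by [].
  have -> : (((true:nat)%:Z) == 1) = true by [].
  by apply/eqP; apply: hp.
case: (ltnP d l) => Hd; last first.
  apply: IH => // kk hkk; exfalso; have := ltn_ord kk; lia.
set k0 : 'I_l := Ordinal Hd.
have [c hc0] := hc k0.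
have decomp : b k0 = c *: Aone theta + ((0, (b k0).2) : A theta).
  apply: pairE; rewrite ?fstD ?sndD ?fstZ ?sndZ /Aone /=.
    by rewrite addr0 -mul_mpolyC mulr1 hc0.
  by rewrite scaler0 add0r.
rewrite -(upd_id b k0) decomp fml (hfn _ k0) ?scaler0 ?add0r; last by rewrite /upd eqxx.
apply: IH.
  move=> kk hkk; rewrite /upd; case: eqP => [_|/eqP hne]; first by [].
  apply: hp.
  by move: hne; rewrite -val_eqE /= => hne; rewrite ltn_neqAle eq_sym hne hkk.
move=> kk; rewrite /upd; case: eqP => _; last exact: hc.
by exists 0; rewrite mpolyC0.
Qed.

Lemma Ahomog_bool (b : bool) (x : AT) :
  Ahomog (theta:=theta) (b : nat)%:Z x = if b then x.1 == 0 else x.2 == 0.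
Proof. by case: b. Qed.

Lemma piAsg_homog (b : bool) (x : AT) :
  Ahomog (theta:=theta) (b : nat)%:Z x -> Ahomog (theta:=theta) (b : nat)%:Z (piA (Asg x)).
Proof.
rewrite !Ahomog_bool; case: b => /eqP hx; rewrite /piA /Asign /=.
  by rewrite hx oppr0 mcoeff0 mpolyC0; apply: eqxx.
by rewrite hx hop0 grad0 subrr; apply: eqxx.
Qed.

Lemma sA_homog0 (x : AT) : Ahomog (theta:=theta) (false : nat)%:Z (sA x).
Proof. by rewrite Ahomog_bool /sA /=; apply: eqxx. Qed.

Definition LT (i j : 'I_l) (z : AT) : AT :=
  if (i < j)%N then piA (Asg z) else if i == j then sA z else z.

Lemma LT_lin i j c x y : LT i j (c *: x + y) = c *: LT i j x + LT i j y.
Proof.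
rewrite /LT; case: (i < j)%N; first exact: pisA_lin.
case: (i == j); first exact: sA_lin.
by [].
Qed.

Lemma T_upd j a i z : T j (upd a i z) = upd (T j a) i (LT i j z).
Proof.
apply: functional_extensionality => kk; rewrite /T /upd /LT.
case: (eqVneq kk i) => [->|ne]; first by [].
by [].
Qed.

Lemma g_multi : multilinear (g f).
Proof.
move=> a i c x y; rewrite /g scaler_sumr -big_split; apply: eq_bigr => j _.
by rewrite !T_upd LT_lin fml.
Qed.

Lemma g_homog (k : int)
  (hfh : forall (e : 'I_l -> bool) (a : 'I_l -> AT),
    (forall i, Ahomog (e i)%:Z (a i)) ->
    Ahomog ((\sum_(i < l) (e i : nat))%:Z - l%:Z + k + 1) (f a)) :
  forall (e : 'I_l -> bool) (a : 'I_l -> AT),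
    (forall i, Ahomog (e i)%:Z (a i)) ->
    Ahomog ((\sum_(i < l) (e i : nat))%:Z - l%:Z + (k - 1) + 1) (g f a).
Proof.
move=> e a ha; rewrite /g; apply: Ahomog_sum => j.
case ej: (e j); last first.
  have h0 : (a j).2 = 0.
    by have := ha j; rewrite ej Ahomog_bool => /eqP.
  rewrite (@f0 _ _ _ _ _ f fml _ j); first exact: Ahomog0.
  by rewrite /T ltnn eqxx sA_deg0.
pose e' := fun kk : 'I_l => if kk == j then false else e kk.
have H := hfh e' (T j a).
have sum : (\sum_(i < l) (e i : nat))%N = (\sum_(i < l) (e' i : nat)).+1.
  rewrite (bigD1 j) //= ej [in RHS](bigD1 j) //= /e' eqxx add0n add1n.
  by congr S; apply: eq_bigr => i /negbTE ->.
rewrite sum.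
set s := (\sum_(i < l) (e' i : nat))%N in H *.
have -> : ((s.+1)%:Z - l%:Z + (k - 1) + 1 = s%:Z - l%:Z + k + 1)%R by lia.
apply: H => kk; rewrite /T /e'.
case hkj: (kk < j)%N.
  have -> : (kk == j) = false by rewrite -val_eqE /= ltn_eqF.
  exact: piAsg_homog.
case: (eqVneq kk j) => [->|ne]; first exact: sA_homog0.
exact: ha.
Qed.

Lemma g_normal (hfn : normal f) : normal (g f).
Proof.
move=> a i hai; rewrite /g; apply: big1 => j _.
case: (ltngtP i j) => hij.
- rewrite -(upd_id (T j a) i).
  have -> : T j a i = - Aone theta by rewrite /T hij hai piA_one.
  rewrite (@fN _ _ _ _ _ f fml) (hfn _ i) ?oppr0 //.
  by rewrite /upd eqxx.
- apply: (hfn _ i); rewrite /T ltnNge (ltnW hij) /=.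
  have -> : (i == j) = false by rewrite -val_eqE /= gtn_eqF.
  exact: hai.
- have ij : i = j := val_inj hij; subst i.
  apply: (@f0 _ _ _ _ _ f fml _ j).
  by rewrite /T ltnn eqxx hai sA_one.
Qed.

End M3.

End Helpers.
Import Helpers.

Theorem mainTheorem4 (R : realType) (n : nat) (theta theta' : 'M[R]_n)
  (Htheta : antisym theta) (Htheta' : antisym theta') (l : nat) (hl : (1 <= l)%N)
  (k : int) (hk : 0 < k)
  (f : ('I_l -> A theta) -> A theta')
  (hf : homCochain k f) (hfn : normal f) (hfc : forall a, dcoch f a = 0) :
  exists g : ('I_l -> A theta) -> A theta',
    [/\ homCochain (k - 1) g, normal g & forall a, dcoch g a = f a].
Proof.
case: hf => fml hfh.
exists (g f); split.
- split; [exact: g_multi | exact: g_homog].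
- exact: g_normal.
- move=> a; rewrite (dcoch_g fml hfc).
  rewrite [f (Pp l a)](vanish_Q fml hk hfh hfn (d := l)) ?subr0 //.
    by move=> kk hkk; exfalso; have := ltn_ord kk; lia.
  by move=> kk; rewrite /Pp ltn_ord; exact: piA_const.
Qed.
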